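(* Let $I$ be an infinite index set, $U$ an ultrafilter on $I$, $(R_i)_{i\in I}$ a sequence of rings with ultraproduct $R_U$, and for each $i$ let $A_i,B_i$ be $R_i$-modules such that the sequences $(A_i)$ and $(B_i)$ are uniformly finitely generated. Then the natural map $F:A_U\otimes_{R_U}B_U\to\mathrm{ulim}(A_i\otimes_{R_i}B_i)$, determined by $\mathrm{ulim}\,a_i\otimes\mathrm{ulim}\,b_i\mapsto\mathrm{ulim}(a_i\otimes b_i)$, is an isomorphism.
   Context: $A_U=\prod_i A_i/U$ denotes the ultraproduct, an $R_U$-module; $\mathrm{ulim}(A_i\otimes B_i)$ is the ultraproduct of the tensor products. A sequence $(M_i)$ of $R_i$-modules is uniformly finitely generated if there is $m\in\mathbb{N}$ such that every $M_i$ is generated by $m$ elements. *)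

(* Defs.v *)
From HB Require Import structures.
From mathcomp Require Import all_boot all_algebra generic_quotient.
From mathcomp Require Import boolp classical_sets cardinality filter.
Set Implicit Arguments.
Unset Strict Implicit.
Unset Printing Implicit Defensive.
Import GRing.Theory.
Local Open Scope ring_scope.
Local Open Scope quotient_scope.
Local Open Scope classical_set_scope.

Section UEquiv.
Context {I : Type} (F : set_system I) {FF : Filter F}.
Variable M : I -> choiceType.

Definition ueq (x y : forall i, M i) : bool := `[< F [set i | x i = y i] >].

Lemma ueqP x y : reflect (F [set i | x i = y i]) (ueq x y).
Proof. exact: asboolP. Qed.

Lemma ueq_is_equiv : equiv_class_of ueq.
Proof.
split=> [x|x y|y x z].
- by apply/ueqP; apply: filterS filterT => i.
- by apply/idP/idP => /ueqP H; apply/ueqP; apply: filterS H => i.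
- move=> /ueqP Hyx /ueqP Hxz; apply/ueqP.
  by apply: filterS (filterI Hyx Hxz) => i [H1 H2]; congruence.
Qed.

Canonical ueq_equiv := EquivRelPack ueq_is_equiv.
Canonical ueq_encModRel := defaultEncModRel ueq.

Definition uquot := {eq_quot ueq}.
HB.instance Definition _ : EqQuotient _ ueq uquot := EqQuotient.on uquot.
Lemma uquotE (x y : forall i, M i) :
  (\pi_uquot x = \pi_uquot y) <-> F [set i | x i = y i].
Proof.
split => [H | H].
  by apply/ueqP; apply/(@eqquotP _ _ uquot); exact: H.
by apply/(@eqquotP _ _ uquot); apply/ueqP.
Qed.

Lemma repr_uquot (x : forall i, M i) : F [set i | repr (\pi_uquot x) i = x i].
Proof. by apply/uquotE; rewrite reprK. Qed.

End UEquiv.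
Arguments ueq {I} F {M} x y.
Arguments uquot {I} F {FF} M.

Section UZmod.
Context {I : Type} (F : set_system I) {FF : Filter F}.
Variable M : I -> zmodType.

Definition uprod := uquot F M.
HB.instance Definition _ := Choice.on uprod.

Local Notation pi := (\pi_(uquot F M)).

Definition uzero : uprod := pi (fun i => 0).
Fact uadd_key : unit. Proof. by []. Qed.
Definition uadd := locked_with uadd_key (fun (x y : uprod) => pi (fun i => repr x i + repr y i)).
Fact uopp_key : unit. Proof. by []. Qed.
Definition uopp := locked_with uopp_key (fun (x : uprod) => pi (fun i => - repr x i)).

Lemma uadd_pi x y : uadd (pi x) (pi y) = pi (fun i => x i + y i).
Proof.
rewrite [uadd]unlock /=; apply/uquotE; apply: filterS (filterI (repr_uquot x) (repr_uquot y)).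
by move=> i [H1 H2] /=; exact: (congr2 _ H1 H2).
Qed.

Lemma uopp_pi x : uopp (pi x) = pi (fun i => - x i).
Proof. by rewrite [uopp]unlock /=; apply/uquotE; apply: filterS (repr_uquot x) => i H /=; exact: (congr1 _ H). Qed.

Lemma uaddA : associative uadd.
Proof.
move=> x y z; elim/quotW: x => x; elim/quotW: y => y; elim/quotW: z => z; rewrite !uadd_pi.
by congr pi; apply: functional_extensionality_dep => i; rewrite addrA.
Qed.

Lemma uaddC : commutative uadd.
Proof.
move=> x y; elim/quotW: x => x; elim/quotW: y => y; rewrite !uadd_pi.
by congr pi; apply: functional_extensionality_dep => i; rewrite addrC.
Qed.

Lemma uadd0 : left_id uzero uadd.
Proof.
move=> x; elim/quotW: x => x; rewrite /uzero uadd_pi.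
by congr pi; apply: functional_extensionality_dep => i; rewrite add0r.
Qed.

Lemma uaddN : left_inverse uzero uopp uadd.
Proof.
move=> x; elim/quotW: x => x; rewrite uopp_pi uadd_pi.
by congr pi; apply: functional_extensionality_dep => i; rewrite addNr.
Qed.

HB.instance Definition _ := GRing.isZmodule.Build uprod uaddA uaddC uadd0 uaddN.

End UZmod.
Arguments uprod {I} F {FF} M.

Section URing.
Context {I : Type} (F : set_system I) {FF : Filter F}.
Variable R : I -> comPzRingType.

Definition uring := uprod F (fun i => R i).
HB.instance Definition _ := GRing.Zmodule.on uring.

Local Notation pi := (\pi_(uquot F (fun i => R i))).

Definition uone : uring := pi (fun i => 1).
Fact umul_key : unit. Proof. by []. Qed.
Definition umul := locked_with umul_key (fun (x y : uring) => pi (fun i => repr x i * repr y i)).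

Lemma umul_pi x y : umul (pi x) (pi y) = pi (fun i => x i * y i).
Proof.
rewrite [umul]unlock /=; apply/uquotE; apply: filterS (filterI (repr_uquot x) (repr_uquot y)).
by move=> i [H1 H2] /=; exact: (congr2 _ H1 H2).
Qed.

Lemma umulA : associative umul.
Proof.
move=> x y z; elim/quotW: x => x; elim/quotW: y => y; elim/quotW: z => z; rewrite !umul_pi.
by congr pi; apply: functional_extensionality_dep => i; rewrite mulrA.
Qed.

Lemma umulC : commutative umul.
Proof.
move=> x y; elim/quotW: x => x; elim/quotW: y => y; rewrite !umul_pi.
by congr pi; apply: functional_extensionality_dep => i; rewrite mulrC.
Qed.

Lemma umul1 : left_id uone umul.
Proof.
move=> x; elim/quotW: x => x; rewrite /uone umul_pi.
by congr pi; apply: functional_extensionality_dep => i; rewrite mul1r.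
Qed.

Lemma umulDl : left_distributive umul +%R.
Proof.
move=> x y z; elim/quotW: x => x; elim/quotW: y => y; elim/quotW: z => z. 
rewrite [_ + _]uadd_pi !umul_pi [_ + _]uadd_pi.
by congr pi; apply: functional_extensionality_dep => i; rewrite mulrDl.
Qed.

HB.instance Definition _ :=
  GRing.Zmodule_isComPzRing.Build uring umulA umulC umul1 umulDl.

End URing.
Arguments uring {I} F {FF} R.

Section UMod.
Context {I : Type} (F : set_system I) {FF : Filter F}.
Variable R : I -> comPzRingType.
Variable M : forall i, lmodType (R i).

Definition umod := uprod F (fun i => M i).
HB.instance Definition _ := GRing.Zmodule.on umod.

Local Notation pi := (\pi_(uquot F (fun i => M i))).
Local Notation piR := (\pi_(uquot F (fun i => R i))).

Fact uscale_key : unit. Proof. by []. Qed.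
Definition uscale := locked_with uscale_key (fun (r : uring F R) (x : umod) => (pi (fun i => repr r i *: repr x i) : umod)).

Lemma uscale_pi r x : uscale (piR r) (pi x) = pi (fun i => r i *: x i).
Proof.
rewrite [uscale]unlock /=; apply/uquotE; apply: filterS (filterI (repr_uquot r) (repr_uquot x)).
by move=> i [H1 H2] /=; exact: (congr2 _ H1 H2).
Qed.

Lemma uscaleA a b v : uscale a (uscale b v) = uscale (a * b) v.
Proof.
elim/quotW: a => a; elim/quotW: b => b; elim/quotW: v => v; rewrite !uscale_pi [_ * _]umul_pi uscale_pi.
by congr pi; apply: functional_extensionality_dep => i; rewrite scalerA.
Qed.

Lemma uscale1 : left_id 1 uscale.
Proof.
move=> v; elim/quotW: v => v; rewrite [1 : uring F R]/(@uone _ F _ R) /uone uscale_pi.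
by congr pi; apply: functional_extensionality_dep => i; rewrite scale1r.
Qed.

Lemma uscaleDr : right_distributive uscale +%R.
Proof.
move=> a u v; elim/quotW: a => a; elim/quotW: u => u; elim/quotW: v => v; rewrite [_ + _]uadd_pi !uscale_pi.
by rewrite [_ + _]uadd_pi; congr pi; apply: functional_extensionality_dep => i; rewrite scalerDr.
Qed.

Lemma uscaleDl (v : umod) (a b : uring F R) : uscale (a + b) v = uscale a v + uscale b v.
Proof.
elim/(@quotW _ (uquot F (fun i => R i))): a => a;
elim/(@quotW _ (uquot F (fun i => R i))): b => b; elim/quotW: v => v; rewrite [_ + _]uadd_pi !uscale_pi.
by rewrite [_ + _]uadd_pi; congr pi; apply: functional_extensionality_dep => i; rewrite scalerDl.
Qed.

HB.instance Definition _ :=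
  GRing.Zmodule_isLmodule.Build (uring F R) umod uscaleA uscale1 uscaleDr uscaleDl.

Definition ulim (x : forall i, M i) : umod := pi x.

End UMod.
Arguments umod {I} F {FF} {R} M.
Arguments ulim {I} F {FF} {R} {M} x.

(* Tensor products over a commutative ring, via the universal property.     *)
Section Tensor.
Variable R : comPzRingType.

Definition lin_map (V W : lmodType R) (g : V -> W) : Prop :=
  forall (r : R) (x y : V), g (r *: x + y) = r *: g x + g y.

Definition bilinear_map (A B C : lmodType R) (f : A -> B -> C) : Prop :=
  (forall b, lin_map (fun a => f a b)) /\ (forall a, lin_map (f a)).

Definition is_tensor_product (A B T : lmodType R) (tens : A -> B -> T) : Prop :=
  bilinear_map tens /\
  forall (C : lmodType R) (f : A -> B -> C), bilinear_map f ->
    exists! g : T -> C, lin_map g /\ forall a b, g (tens a b) = f a b.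

End Tensor.

Definition unif_fin_gen {I : Type} (R : I -> comPzRingType)
  (M : forall i, lmodType (R i)) : Prop :=
  exists m : nat, forall i, exists g : 'I_m -> M i,
    forall x : M i, exists c : 'I_m -> R i, x = \sum_(j < m) c j *: g j.

(* Main.v *)
Require Import Defs.
From HB Require Import structures.
From mathcomp Require Import all_boot all_algebra generic_quotient.
From mathcomp Require Import boolp classical_sets cardinality filter.
Set Implicit Arguments.
Unset Strict Implicit.
Unset Printing Implicit Defensive.
Import GRing.Theory.
Local Open Scope ring_scope.
Local Open Scope quotient_scope.

Section Lin.
Context {R : comPzRingType} {V W : lmodType R} (g : V -> W) (hg : lin_map g).
Lemma lin0 : g 0 = 0.
Proof.
have := hg 1 0 0; rewrite addr0 !scale1r => H.
by rewrite -[LHS](addrK (g 0)) -H subrr.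
Qed.
Lemma linD x y : g (x + y) = g x + g y.
Proof. by have := hg 1 x y; rewrite !scale1r. Qed.
Lemma linZ r x : g (r *: x) = r *: g x.
Proof. by have := hg r x 0; rewrite !addr0 lin0 addr0. Qed.
Lemma linN x : g (- x) = - g x.
Proof. by rewrite -scaleN1r linZ scaleN1r. Qed.
Lemma linB x y : g (x - y) = g x - g y.
Proof. by rewrite linD linN. Qed.
Lemma lin_sum (J : Type) (s : seq J) (P : pred J) (F : J -> V) :
  g (\sum_(j <- s | P j) F j) = \sum_(j <- s | P j) g (F j).
Proof.
elim: s => [|a s IH]; first by rewrite !big_nil lin0.
by rewrite !big_cons; case: (P a); rewrite ?linD IH.
Qed.
End Lin.

Section QMod.
Context {R : comPzRingType} (V : lmodType R) (P : V -> Prop).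
Context (P0 : P 0) (PD : forall x y, P x -> P y -> P (x + y))
  (PZ : forall r x, P x -> P (r *: x)).

Definition qeq (x y : V) : bool := `[< P (x - y) >].

Lemma qeq_is_equiv : equiv_class_of qeq.
Proof.
split=> [x|x y|y x z].
- by apply/asboolP; rewrite subrr.
- apply/idP/idP => /asboolP H; apply/asboolP;
  by rewrite -opprB -scaleN1r; apply: PZ.
- move=> /asboolP H1 /asboolP H2; apply/asboolP.
  have := PD H1 H2; congr P.
  by rewrite addrA subrK.
Qed.

Canonical qeq_equiv := EquivRelPack qeq_is_equiv.
Canonical qeq_encModRel := defaultEncModRel qeq.

Definition qquot := {eq_quot qeq}.
HB.instance Definition _ : EqQuotient _ qeq qquot := EqQuotient.on qquot.
HB.instance Definition _ := Choice.on qquot.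

Local Notation pi := (\pi_qquot).

Lemma qquotE (x y : V) : (pi x = pi y) <-> P (x - y).
Proof.
split => [H | H].
  by apply/asboolP; apply/(@eqquotP _ _ qquot); exact: H.
by apply/(@eqquotP _ _ qquot); apply/asboolP.
Qed.

Lemma qrepr x : P (repr (pi x) - x).
Proof. by apply/qquotE; rewrite reprK. Qed.

Definition qzero : qquot := pi 0.
Fact qadd_key : unit. Proof. by []. Qed.
Definition qadd := locked_with qadd_key (fun (x y : qquot) => (pi (repr x + repr y) : qquot)).
Fact qopp_key : unit. Proof. by []. Qed.
Definition qopp := locked_with qopp_key (fun (x : qquot) => (pi (- repr x) : qquot)).
Fact qscale_key : unit. Proof. by []. Qed.
Definition qscale := locked_with qscale_key (fun (r : R) (x : qquot) => (pi (r *: repr x) : qquot)).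

Lemma qadd_pi x y : qadd (pi x) (pi y) = pi (x + y).
Proof.
rewrite [qadd]unlock.
apply/qquotE; have := PD (qrepr x) (qrepr y); congr P.
by rewrite opprD !addrA; congr (_ + _); rewrite -!addrA; congr (_ + _); rewrite addrC.
Qed.
Lemma qopp_pi x : qopp (pi x) = pi (- x).
Proof.
rewrite [qopp]unlock.
apply/qquotE; have := PZ (-1) (qrepr x); congr P.
by rewrite scaleN1r opprB addrC opprK.
Qed.
Lemma qscale_pi r x : qscale r (pi x) = pi (r *: x).
Proof.
rewrite [qscale]unlock.
apply/qquotE; have := PZ r (qrepr x); congr P.
by rewrite scalerBr.
Qed.

Lemma qaddA : associative qadd.
Proof.
move=> x y z; elim/quotW: x => x; elim/quotW: y => y; elim/quotW: z => z.
by rewrite !qadd_pi addrA.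
Qed.
Lemma qaddC : commutative qadd.
Proof. by move=> x y; elim/quotW: x => x; elim/quotW: y => y; rewrite !qadd_pi addrC. Qed.
Lemma qadd0 : left_id qzero qadd.
Proof. by move=> x; elim/quotW: x => x; rewrite /qzero qadd_pi add0r. Qed.
Lemma qaddN : left_inverse qzero qopp qadd.
Proof. by move=> x; elim/quotW: x => x; rewrite qopp_pi qadd_pi addNr. Qed.

HB.instance Definition _ := GRing.isZmodule.Build qquot qaddA qaddC qadd0 qaddN.
Lemma qpiD x y : (pi x + pi y : qquot) = pi (x + y).
Proof. exact: qadd_pi. Qed.

Lemma qscaleA a b v : qscale a (qscale b v) = qscale (a * b) v.
Proof. by elim/quotW: v => v; rewrite !qscale_pi scalerA. Qed.
Lemma qscale1 : left_id 1 qscale.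
Proof. by move=> v; elim/quotW: v => v; rewrite qscale_pi scale1r. Qed.
Lemma qscaleDr : right_distributive qscale +%R.
Proof.
move=> a u v; elim/quotW: u => u; elim/quotW: v => v.
by rewrite qpiD !qscale_pi qpiD scalerDr.
Qed.
Lemma qscaleDl (v : qquot) (a b : R) : qscale (a + b) v = qscale a v + qscale b v.
Proof.
elim/quotW: v => v.
by rewrite !qscale_pi qpiD scalerDl.
Qed.

HB.instance Definition _ :=
  GRing.Zmodule_isLmodule.Build R qquot qscaleA qscale1 qscaleDr qscaleDl.

Lemma quot_exists : exists (Q : lmodType R) (p : V -> Q),
  lin_map p /\ forall x, p x = 0 <-> P x.
Proof.
exists qquot, pi; split.
  move=> r x y; rewrite -qpiD.
  by rewrite -[r *: pi x]/(qscale r (pi x)) qscale_pi.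
move=> x; rewrite -[0]/qzero; split => H.
  by have := (qquotE x 0).1 H; rewrite subr0.
by apply/qquotE; rewrite subr0.
Qed.
End QMod.
Lemma sum_delta {R : comPzRingType} {V : lmodType R} m (F : 'I_m -> V) (j : 'I_m) :
  \sum_(j' < m) ((j' == j)%:R : R) *: F j' = F j.
Proof.
rewrite (bigD1 j) //= eqxx scale1r big1 ?addr0 // => j' /negbTE ->.
by rewrite scale0r.
Qed.

Lemma sum_delta' {R : comPzRingType} {V : lmodType R} m (F : 'I_m -> V) (j : 'I_m) :
  \sum_(j' < m) ((j == j')%:R : R) *: F j' = F j.
Proof.
rewrite -[RHS](sum_delta F j); apply: eq_bigr => j' _; by rewrite eq_sym.
Qed.

Section TensorFacts.
Context {R : comPzRingType} {A B T : lmodType R} (tens : A -> B -> T)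
  (Htp : is_tensor_product tens).
Context (m : nat) (g : 'I_m -> A)
  (Hg : forall x : A, exists c : 'I_m -> R, x = \sum_(j < m) c j *: g j).

Lemma tlinl b : lin_map (fun a => tens a b).
Proof. exact: Htp.1.1. Qed.
Lemma tlinr a : lin_map (tens a).
Proof. exact: Htp.1.2. Qed.

Lemma tens_span_gen (t : T) : exists b : 'I_m -> B, t = \sum_(j < m) tens (g j) (b j).
Proof.
pose S (t : T) := exists b : 'I_m -> B, t = \sum_(j < m) tens (g j) (b j).
have S0 : S 0.
  exists (fun _ => 0); rewrite big1 // => j _; exact: lin0 (tlinr _).
have SD : forall x y, S x -> S y -> S (x + y).
  move=> x y [b ->] [b' ->]; exists (fun j => b j + b' j).
  by rewrite -big_split; apply: eq_bigr => j _; rewrite linD //; exact: tlinr.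
have SZ : forall r x, S x -> S (r *: x).
  move=> r x [b ->]; exists (fun j => r *: b j).
  by rewrite scaler_sumr; apply: eq_bigr => j _; rewrite linZ //; exact: tlinr.
have [Q [p [linp Hp]]] := quot_exists S0 SD SZ.
suff p0 : forall t, p t = 0 by apply/Hp/p0.
have fbil : bilinear_map (fun (_ : A) (_ : B) => (0 : Q)).
  by split => ? r x y; rewrite scaler0 addr0.
have [g0 [[_ Hg0] Hu]] := Htp.2 Q _ fbil.
have E1 : g0 = p.
  apply: Hu; split => // a b; apply/Hp.
  have [c ->] := Hg a; rewrite (lin_sum (tlinl b)).
  exists (fun j => c j *: b); apply: eq_bigr => j _.
  by rewrite (linZ (tlinl b)) (linZ (tlinr _)).
have E2 : g0 = (fun _ => 0).
  by apply: Hu; split => // r x y; rewrite scaler0 addr0.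
by move=> t0; rewrite -E1 E2.
Qed.

Context (n : nat) (h : 'I_n -> B)
  (Hh : forall x : B, exists c : 'I_n -> R, x = \sum_(k < n) c k *: h k).

Lemma tens_ker (b : 'I_m -> B) : \sum_(j < m) tens (g j) (b j) = 0 ->
  exists kap : 'I_n -> 'I_m -> R, (forall k, \sum_(j < m) kap k j *: g j = 0) /\
    forall j, b j = \sum_(k < n) kap k j *: h k.
Proof.
move=> Hb.
pose N (v : {ffun 'I_m -> B}) := exists kap : 'I_n -> 'I_m -> R,
  (forall k, \sum_(j < m) kap k j *: g j = 0) /\
    forall j, v j = \sum_(k < n) kap k j *: h k.
have N0 : N 0.
  exists (fun _ _ => 0); split => [k|j]; rewrite ?ffunE big1 // => *; exact: scale0r.
have ND : forall x y, N x -> N y -> N (x + y).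
  move=> x y [k1 [H1 H1']] [k2 [H2 H2']]; exists (fun k j => k1 k j + k2 k j); split.
    by move=> k; under eq_bigr do rewrite scalerDl; rewrite big_split /= H1 H2 addr0.
  by move=> j; rewrite ffunE H1' H2' -big_split; apply: eq_bigr => k _; rewrite scalerDl.
have NZ : forall r x, N x -> N (r *: x).
  move=> r x [k1 [H1 H1']]; exists (fun k j => r * k1 k j); split.
    by move=> k; under eq_bigr do rewrite -scalerA; rewrite -scaler_sumr H1 scaler0.
  by move=> j; rewrite ffunE H1' scaler_sumr; apply: eq_bigr => k _; rewrite scalerA.
have [Q [p [linp Hp]]] := quot_exists N0 ND NZ.
have [cA HcA] := choice Hg.
have [cB HcB] := choice Hh.
pose f a bb := p [ffun j => cA a j *: bb].
have fD0 : forall d : 'I_m -> R, \sum_(j < m) d j *: g j = 0 ->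
    forall bb, p [ffun j => d j *: bb] = 0.
  move=> d Hd bb; apply/Hp; exists (fun k j => d j * cB bb k); split.
    move=> k; under eq_bigr do rewrite mulrC -scalerA.
    by rewrite -scaler_sumr Hd scaler0.
  move=> j; rewrite ffunE {1}(HcB bb) scaler_sumr; apply: eq_bigr => k _.
  by rewrite scalerA.
have frep : forall a bb (c : 'I_m -> R), a = \sum_(j < m) c j *: g j ->
    f a bb = p [ffun j => c j *: bb].
  move=> a bb c Ha; apply/eqP; rewrite -subr_eq0 -(linB linp); apply/eqP.
  have -> : [ffun j => cA a j *: bb] - [ffun j => c j *: bb] =
            [ffun j => (cA a j - c j) *: bb].
    by apply/ffunP => j; rewrite !ffunE scalerBl.
  apply: fD0; under eq_bigr do rewrite scalerBl.
  by rewrite sumrB -HcA -Ha subrr.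
have fbil : bilinear_map f.
  split => [b' r a a'|a r b' b''].
    rewrite (frep _ _ (fun j => r * cA a j + cA a' j)); last first.
      under eq_bigr do rewrite scalerDl -scalerA.
      by rewrite big_split /= -scaler_sumr -!HcA.
    rewrite -(linZ linp) -(linD linp); congr p; apply/ffunP => j.
    by rewrite !ffunE scalerDl scalerA.
  rewrite /f -(linZ linp) -(linD linp); congr p; apply/ffunP => j.
  by rewrite !ffunE scalerDr !scalerA mulrC.
have [phi [[linphi Hphi] _]] := Htp.2 Q f fbil.
have : p [ffun j => b j] = 0.
  rewrite -(lin0 linphi) -Hb (lin_sum linphi).
  have fg : forall j bb, f (g j) bb = p [ffun j' => ((j' == j)%:R : R) *: bb].
    by move=> j bb; apply: frep; rewrite sum_delta.
  under eq_bigr do rewrite Hphi fg.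
  rewrite -(lin_sum linp); congr p; apply/ffunP => j.
  rewrite ffunE sum_ffunE.
  under eq_bigr do rewrite ffunE.
  by rewrite sum_delta'.
move/Hp => [kap [H1 H2]]; exists kap; split => // j.
by rewrite -H2 ffunE.
Qed.

End TensorFacts.

Local Open Scope classical_set_scope.
Section ULim.
Context {I : Type} (U : set_system I) {FF : Filter U}.
Context (R : I -> comPzRingType) (M : forall i, lmodType (R i)).

Definition rlim (r : forall i, R i) : uring U R := \pi_(uquot U (fun i => R i)) r.

Lemma ulimD (x y : forall i, M i) : ulim U x + ulim U y = ulim U (fun i => x i + y i).
Proof. exact: uadd_pi. Qed.
Lemma ulim0 : (0 : umod U M) = ulim U (fun i => 0).
Proof. by []. Qed.
Lemma ulimZ r (x : forall i, M i) : rlim r *: ulim U x = ulim U (fun i => r i *: x i).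
Proof. exact: uscale_pi. Qed.
Lemma ulim_sum m (f : 'I_m -> forall i, M i) :
  \sum_(j < m) ulim U (f j) = ulim U (fun i => \sum_(j < m) f j i).
Proof.
elim: m f => [|m IH] f.
  rewrite big_ord0 ulim0; congr (ulim U _); apply: functional_extensionality_dep => i.
  by rewrite big_ord0.
rewrite big_ord_recr /= IH ulimD; congr (ulim U _); apply: functional_extensionality_dep => i.
by rewrite big_ord_recr.
Qed.
Lemma ulim_eqP (x y : forall i, M i) : U [set i | x i = y i] -> ulim U x = ulim U y.
Proof. by move=> H; apply/uquotE. Qed.
Lemma ulim_eqE (x y : forall i, M i) : ulim U x = ulim U y -> U [set i | x i = y i].
Proof. by move=> H; apply/uquotE. Qed.
Lemma ulim_repr (X : umod U M) : ulim U (repr X) = X.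
Proof. exact: reprK. Qed.

Lemma umod_gen m (g : forall i, 'I_m -> M i)
  (Hg : forall i (x : M i), exists c : 'I_m -> R i, x = \sum_(j < m) c j *: g i j) :
  forall X : umod U M, exists c : 'I_m -> uring U R,
    X = \sum_(j < m) c j *: ulim U (fun i => g i j).
Proof.
move=> X; pose c i := proj1_sig (cid (Hg i (repr X i))).
have Hc i : repr X i = \sum_(j < m) c i j *: g i j := proj2_sig (cid (Hg i (repr X i))).
exists (fun j => rlim (fun i => c i j)).
under eq_bigr do rewrite ulimZ.
rewrite ulim_sum -{1}(ulim_repr X); congr (ulim U _).
by apply: functional_extensionality_dep => i; rewrite Hc.
Qed.
End ULim.
Unset Implicit Arguments.
Local Close Scope quotient_scope.
Local Open Scope ring_scope.
Local Open Scope classical_set_scope.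

Theorem lemma2p9 (I : Type) (U : set_system I) (HU : UltraFilter U)
  (R : I -> comPzRingType) (A B T : forall i, lmodType (R i))
  (tens : forall i, A i -> B i -> T i) :
  ~ finite_set [set: I] ->
  unif_fin_gen A -> unif_fin_gen B ->
  (forall i, is_tensor_product (tens i)) ->
  forall (TU : lmodType (uring U R)) (tensU : umod U A -> umod U B -> TU),
    is_tensor_product tensU ->
  forall Fm : TU -> umod U T,
    lin_map Fm ->
    (forall (a : forall i, A i) (b : forall i, B i),
        Fm (tensU (ulim U a) (ulim U b)) = ulim U (fun i => tens i (a i) (b i))) ->
    bijective Fm.
Proof.
move=> _ [m HA] [n HB] Htp TU tensU HtpU Fm linF HF.
pose gA i := proj1_sig (cid (HA i)).
have HgA i : forall x, exists c, x = \sum_(j < m) c j *: gA i j := proj2_sig (cid (HA i)).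
pose gB i := proj1_sig (cid (HB i)).
have HgB i : forall x, exists c, x = \sum_(k < n) c k *: gB i k := proj2_sig (cid (HB i)).
pose GA := fun j : 'I_m => @ulim I U (@ultra_proper I U HU) R A (fun i => gA i j).
pose GB := fun k : 'I_n => @ulim I U (@ultra_proper I U HU) R B (fun i => gB i k).
have genA := @umod_gen I U (@ultra_proper I U HU) R A m gA HgA.
have genB := @umod_gen I U (@ultra_proper I U HU) R B n gB HgB.
have surj : forall y, exists x, Fm x = y.
  move=> y.
  pose b i := proj1_sig (cid (tens_span_gen (Htp i) (HgA i) (repr y i))).
  have Hb i : repr y i = \sum_(j < m) tens i (gA i j) (b i j) :=
    proj2_sig (cid (tens_span_gen (Htp i) (HgA i) (repr y i))).
  exists (\sum_(j < m) tensU (GA j) (ulim U (fun i => b i j))).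
  rewrite (lin_sum linF).
  under eq_bigr do rewrite HF.
  rewrite ulim_sum -{1}(ulim_repr y); congr (ulim U _).
  by apply: functional_extensionality_dep => i; rewrite Hb.
have ker : forall tau, Fm tau = 0 -> tau = 0.
  move=> tau Htau.
  have [beta Hbeta] := tens_span_gen HtpU genA tau.
  pose bb j := repr (beta j).
  have Hbb j : beta j = ulim U (bb j) by rewrite ulim_repr.
  pose S := [set i | \sum_(j < m) tens i (gA i j) (bb j i) = 0].
  have US : U S.
    apply: ulim_eqE; rewrite -ulim0 -ulim_sum.
    rewrite -[RHS]Htau Hbeta (lin_sum linF).
    by apply: eq_bigr => j _; rewrite Hbb HF.
  have Hk i : exists kap : 'I_n -> 'I_m -> R i, S i ->
      (forall k, \sum_(j < m) kap k j *: gA i j = 0) /\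
      forall j, bb j i = \sum_(k < n) kap k j *: gB i k.
    have [Si|nSi] := pselect (S i).
      have [kap Hkap] := tens_ker (Htp i) (HgA i) (HgB i) Si.
      by exists kap.
    by exists (fun _ _ => 0).
  pose kap i := proj1_sig (cid (Hk i)).
  have Hkap i : S i -> _ := proj2_sig (cid (Hk i)).
  pose K := fun (k : 'I_n) (j : 'I_m) => @rlim I U (@ultra_proper I U HU) R (fun i => kap i k j).
  have C1 k : \sum_(j < m) K k j *: GA j = 0.
    under eq_bigr do rewrite ulimZ.
    rewrite ulim_sum ulim0; apply: ulim_eqP; apply: filterS US => i Si.
    exact: (Hkap i Si).1.
  have C2 j : beta j = \sum_(k < n) K k j *: GB k.
    under eq_bigr do rewrite ulimZ.
    rewrite ulim_sum Hbb; apply: ulim_eqP; apply: filterS US => i Si.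
    exact: (Hkap i Si).2.
  rewrite Hbeta.
  under eq_bigr do rewrite C2 (lin_sum (tlinr HtpU _)).
  rewrite exchange_big /=.
  rewrite big1 // => k _.
  under eq_bigr do rewrite (linZ (tlinr HtpU _)) -(linZ (tlinl HtpU _)).
  by rewrite -(lin_sum (tlinl HtpU _)) C1 (lin0 (tlinl HtpU _)).
have [Gi HGi] := choice surj.
exists Gi => // x; apply/eqP; rewrite -subr_eq0; apply/eqP; apply: ker.
by rewrite (linB linF) HGi subrr.
Qed.
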